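(* In the setting below, suppose $0<\eta\le\frac{1}{L(K+1)}$. Then for every $k\ge0$ the iterates of the PIAG method satisfy \[ -\|d_k\|^2\le -\frac{\mu}{4}F_{k+1}+\eta L\sum_{j=(k-K)_+}^{k-1}\|d_j\|^2 . \]
   Context: Let $m,n\ge 1$ be integers and $\|\cdot\|$ the Euclidean norm on $\mathbb{R}^n$. For $i=1,\dots,m$, let $f_i:\mathbb{R}^n\to\mathbb{R}$ be continuously differentiable with $\|\nabla f_i(x)-\nabla f_i(y)\|\le L_i\|x-y\|$ for all $x,y$, where $L_i\ge 0$ (the $f_i$ are not assumed convex). Let $f=\frac1m\sum_{i=1}^m f_i$ and $L=\frac1m\sum_{i=1}^m L_i$. Assume $f$ is $\mu$-strongly convex for some $\mu>0$ (i.e. $x\mapsto f(x)-\frac{\mu}{2}\|x\|^2$ is convex). Let $r:\mathbb{R}^n\to(-\infty,\infty]$ be proper, closed and convex, let $F=f+r$, and let $x^*$ be the unique minimizer of $F$. For $\eta>0$ define $\mathrm{prox}_r^\eta(y)=\arg\min_{x\in\mathbb{R}^n}\{\frac12\|x-y\|^2+\eta r(x)\}$. PIAG method: fix an integer $K\ge 0$, a step size $\eta>0$ and $x_0\in\mathbb{R}^n$; for each $k\ge0$ and each $i$ let $\tau_{i,k}$ be any (deterministically chosen) integer with $\max(k-K,0)\le\tau_{i,k}\le k$; set $g_k=\frac1m\sum_{i=1}^m\nabla f_i(x_{\tau_{i,k}})$ and $x_{k+1}=\mathrm{prox}_r^\eta(x_k-\eta g_k)$. Define $d_k=(x_{k+1}-x_k)/\eta$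 and $F_k=F(x_k)-F(x^* )$. Write $(t)_+=\max(t,0)$; empty sums are zero. *)

(* Defs.v *)
From HB Require Import structures.
From mathcomp Require Import all_boot all_order all_algebra.
From mathcomp Require Import all_classical all_reals all_analysis.

Set Implicit Arguments.
Unset Strict Implicit.
Unset Printing Implicit Defensive.

Import Order.TTheory GRing.Theory Num.Theory.
Import numFieldNormedType.Exports.
Local Open Scope ring_scope.
Local Open Scope classical_set_scope.

Definition dotv (R : realType) (n : nat) (u v : 'rV[R]_n) : R :=
  \sum_(j < n) u 0 j * v 0 j.

Definition norm2 (R : realType) (n : nat) (v : 'rV[R]_n) : R :=
  Num.sqrt (\sum_(j < n) (v 0 j) ^+ 2).

Definition has_gradient (R : realType) (n : nat)
    (g : 'rV[R]_n -> R) (gr : 'rV[R]_n -> 'rV[R]_n) : Prop :=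
  forall x : 'rV[R]_n, differentiable g x /\ forall v, 'd g x v = dotv (gr x) v.

Definition convex_fun (R : realType) (n : nat) (g : 'rV[R]_n -> R) : Prop :=
  forall (x y : 'rV[R]_n) (t : R), 0 <= t <= 1 ->
    g (t *: x + (1 - t) *: y) <= t * g x + (1 - t) * g y.

Definition strongly_convex (R : realType) (n : nat) (mu : R)
    (g : 'rV[R]_n -> R) : Prop :=
  convex_fun (fun x => g x - mu / 2 * norm2 x ^+ 2).

Definition proper_fun (R : realType) (n : nat) (r : 'rV[R]_n -> \bar R) : Prop :=
  (forall x, r x != -oo%E) /\ exists x, r x != +oo%E.

(* closed = lower semicontinuous = all sublevel sets closed *)
Definition closed_fun (R : realType) (n : nat) (r : 'rV[R]_n -> \bar R) : Prop :=
  forall a : R, closed [set x | (r x <= a%:E)%E].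

Definition convex_efun (R : realType) (n : nat) (r : 'rV[R]_n -> \bar R) : Prop :=
  forall (x y : 'rV[R]_n) (t : R), 0 <= t <= 1 ->
    (r (t *: x + (1 - t) *: y)%R <= t%:E * r x + (1 - t)%:E * r y)%E.

Definition is_minimizer (R : realType) (n : nat) (phi : 'rV[R]_n -> \bar R)
    (z : 'rV[R]_n) : Prop :=
  forall x, (phi z <= phi x)%E.

(* z = prox_r^eta(y) : z minimizes x |-> 1/2 ||x - y||^2 + eta r(x)
   (the minimizer is unique for proper closed convex r). *)
Definition is_prox (R : realType) (n : nat) (r : 'rV[R]_n -> \bar R) (eta : R)
    (y z : 'rV[R]_n) : Prop :=
  is_minimizer (fun x => ((1 / 2 * norm2 (x - y) ^+ 2)%:E + eta%:E * r x)%E) z.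

(* Main.v *)
Require Import Defs.
From HB Require Import structures.
From mathcomp Require Import all_boot all_order all_algebra.
From mathcomp Require Import all_classical all_reals all_analysis.
From mathcomp Require Import ring lra.
Import Order.TTheory GRing.Theory Num.Theory.
Import numFieldNormedType.Exports.

Module PIAGHelpers.
Local Open Scope ring_scope.
Set Implicit Arguments.
Unset Strict Implicit.

Section Vec.
Variables (R : realType) (n : nat).
Local Notation V := 'rV[R]_n.
Implicit Types u v w : V.

Lemma dotvC u v : dotv u v = dotv v u.
Proof. by rewrite /dotv; apply: eq_bigr => j _; rewrite mulrC. Qed.
Lemma dotvDl u v w : dotv (u + v) w = dotv u w + dotv v w.
Proof. by rewrite /dotv -big_split; apply: eq_bigr => j _; rewrite mxE mulrDl. Qed.
Lemma dotvZl a u v : dotv (a *: u) v = a * dotv u v.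
Proof. by rewrite /dotv mulr_sumr; apply: eq_bigr => j _; rewrite mxE mulrA. Qed.
Lemma dotvNl u v : dotv (- u) v = - dotv u v.
Proof. by rewrite -scaleN1r dotvZl mulN1r. Qed.
Lemma dotvBl u v w : dotv (u - v) w = dotv u w - dotv v w.
Proof. by rewrite dotvDl dotvNl. Qed.
Lemma dotvDr u v w : dotv w (u + v) = dotv w u + dotv w v.
Proof. by rewrite !(dotvC w) dotvDl. Qed.
Lemma dotvZr a u v : dotv v (a *: u) = a * dotv v u.
Proof. by rewrite !(dotvC v) dotvZl. Qed.
Lemma dotvBr u v w : dotv w (u - v) = dotv w u - dotv w v.
Proof. by rewrite !(dotvC w) dotvBl. Qed.
Lemma dotv0l v : dotv 0 v = 0.
Proof. by rewrite /dotv big1 // => j _; rewrite mxE mul0r. Qed.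
Lemma dotv_ge0 v : 0 <= dotv v v.
Proof. by rewrite /dotv sumr_ge0 // => j _; rewrite -expr2 sqr_ge0. Qed.
Lemma norm2_ge0 v : 0 <= norm2 v.
Proof. exact: sqrtr_ge0. Qed.
Lemma norm2_sq v : norm2 v ^+ 2 = dotv v v.
Proof.
rewrite /norm2 sqr_sqrtr; last by rewrite sumr_ge0 // => j _; rewrite sqr_ge0.
by apply: eq_bigr => j _; rewrite expr2.
Qed.
Lemma dotv_sum m (f : 'I_m -> V) w :
  dotv (\sum_(i < m) f i) w = \sum_(i < m) dotv (f i) w.
Proof.
elim/big_rec2: _ => [|i y1 y2 _ <-]; first exact: dotv0l.
by rewrite dotvDl.
Qed.
Lemma quad s t u v : dotv (s *: u + t *: v) (s *: u + t *: v) =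
  s ^+ 2 * dotv u u + 2 * s * t * dotv u v + t ^+ 2 * dotv v v.
Proof.
rewrite !(dotvDl, dotvDr, dotvZl, dotvZr) (dotvC v u); ring.
Qed.

Lemma quad1 t u v : dotv (u + t *: v) (u + t *: v) =
  dotv u u + 2 * t * dotv u v + t ^+ 2 * dotv v v.
Proof.
rewrite !(dotvDl, dotvDr, dotvZl, dotvZr) (dotvC v u); ring.
Qed.

Lemma dotv_le u v : dotv u v <= norm2 u * norm2 v.
Proof.
set a := dotv u u; set b := dotv v v; set c := dotv u v.
have ha : 0 <= a := dotv_ge0 u. have hb : 0 <= b := dotv_ge0 v.
have h1 := dotv_ge0 (b *: u + (- c) *: v).
have h2 := dotv_ge0 (c *: u + (- a) *: v).
have h3 := dotv_ge0 (1 *: u + 1 *: v).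
have h4 := dotv_ge0 (1 *: u + (-1) *: v).
move: h1 h2 h3 h4; rewrite !quad -/a -/b -/c => h1 h2 h3 h4.
have hc : c ^+ 2 <= a * b.
  have [b0|bp] := eqVneq b 0.
    have [a0|ap] := eqVneq a 0.
      rewrite a0 b0 in h3 h4 *; have -> : c = 0 by apply/eqP; rewrite eq_le; apply/andP; split; nra.
      by rewrite expr0n /= mul0r.
    have ap' : 0 < a by rewrite lt_def ap.
    nra.
  have bp' : 0 < b by rewrite lt_def bp.
  nra.
have hp := norm2_ge0 u; have hq := norm2_ge0 v.
have ea := norm2_sq u; have eb := norm2_sq v.
rewrite -/a -/b in ea eb.
rewrite -ea -eb -exprMn in hc.
have hpq : 0 <= norm2 u * norm2 v by rewrite mulr_ge0.
move: hc hpq; set P := norm2 u * norm2 v => hc hpq.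
have [c0|c0] := lerP c 0; first lra.
nra.
Qed.

Lemma norm2D u v : norm2 (u + v) <= norm2 u + norm2 v.
Proof.
have h := dotv_le u v.
have e := norm2_sq (u + v).
rewrite !(dotvDl, dotvDr) (dotvC v u) in e.
have ea := norm2_sq u; have eb := norm2_sq v.
have := norm2_ge0 u; have := norm2_ge0 v; have := norm2_ge0 (u + v).
nra.
Qed.

Lemma norm2Z a v : norm2 (a *: v) = `|a| * norm2 v.
Proof.
rewrite /norm2 (eq_bigr (fun j => a ^+ 2 * v 0 j ^+ 2)); last first.
  by move=> j _; rewrite mxE exprMn.
by rewrite -mulr_sumr sqrtrM ?sqr_ge0 // sqrtr_sqr.
Qed.

Lemma norm2N v : norm2 (- v) = norm2 v.
Proof. by rewrite -scaleN1r norm2Z normrN1 mul1r. Qed.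

Lemma norm2_0 : norm2 (0 : V) = 0.
Proof. by rewrite -(scale0r 0) norm2Z normr0 mul0r. Qed.

Lemma norm2_sum (I : Type) (s : seq I) (P : pred I) (F : I -> V) :
  norm2 (\sum_(i <- s | P i) F i) <= \sum_(i <- s | P i) norm2 (F i).
Proof.
elim/big_rec2: _ => [|i y1 y2 _ h]; first by rewrite norm2_0.
by apply: le_trans (norm2D _ _) _; rewrite lerD2l.
Qed.
End Vec.

Lemma sum_sq_le (R : realType) (s : seq nat) (a : nat -> R) :
  (\sum_(j <- s) a j) ^+ 2 <= (size s)%:R * \sum_(j <- s) a j ^+ 2.
Proof.
elim: s => [|x s IH]; first by rewrite !big_nil expr0n /= mul0r.
rewrite !big_cons /=.
have hQ : 0 <= \sum_(j <- s) a j ^+ 2 by rewrite sumr_ge0 // => j _; rewrite sqr_ge0.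
case: s IH hQ => [|y s] IH hQ.
  by rewrite !big_nil /= addr0 mul1r addr0.
move: IH hQ.
set S := \sum_(j <- _) a j; set Q := \sum_(j <- _) a j ^+ 2.
set N := (size (y :: s))%:R => IH hQ.
have hN : 0 < N by rewrite /N ltr0n.
rewrite -[(size s).+2]addn1 natrD -/N.
have := sqr_ge0 (N * a x - S).
nra.
Qed.

Local Open Scope ring_scope.
Local Open Scope classical_set_scope.

Lemma small_t (R : realType) (a b c : R) : 0 <= c ->
  (forall t, 0 < t <= 1 -> a <= b + t * c) -> a <= b.
Proof.
move=> c0 H; rewrite leNgt; apply/negP => hab.
pose t := (a - b) / (a - b + c).
have hd : 0 < a - b + c by lra.
have ht : t * (a - b + c) = a - b by rewrite /t mulfVK // gt_eqF.
have t0 : 0 < t by rewrite /t divr_gt0 // subr_gt0.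
have t1 : t <= 1 by rewrite /t ler_pdivrMr // mul1r; lra.
have := H t (introT andP (conj t0 t1)).
nra.
Qed.

Lemma lim_ineq (R : realType) (n : nat) (S : 'rV[R]_n -> R) (z v : 'rV[R]_n)
  (D C b : R) : derivable S z v -> 'D_v S z = D ->
  (forall h, 0 < h <= 1 -> h^-1 * (S (h *: v + z) - S z) <= C + b * h) ->
  D <= C.
Proof.
move=> der dE H.
have cv : (fun h : R => h^-1 *: ((S \o shift z) (h *: v) - S z)) @ 0^' --> D.
  by rewrite -dE; exact: der.
have cvr : (fun h : R => h^-1 *: ((S \o shift z) (h *: v) - S z)) @ 0^'+ --> D.
  move=> A /cv /nbhs_ballP [e e0 xe_A].
  by exists e => //= y xe_y; rewrite lt_def => /andP [xney _]; apply: xe_A.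
have cg : (fun h : R => C + b * h) @ 0^'+ --> C + b * 0.
  apply: cvgD; first exact: cvg_cst.
  apply: cvgMr; apply: cvg_at_right_filter; exact: cvg_id.
rewrite mulr0 addr0 in cg.
apply: (ler_cvg_to cvr cg).
near=> h.
have h0 : 0 < h by near: h; exact: nbhs_right_gt.
have h1 : h <= 1 by near: h; apply: nbhs_right_le; exact: ltr01.
by have := H h (introT andP (conj h0 h1)); rewrite /= addrC.
Unshelve. all: by end_near.
Qed.

End PIAGHelpers.
Import PIAGHelpers.

Local Open Scope ring_scope.


Theorem lemma3 (R : realType) (m n : nat) (hm : (0 < m)%N) (hn : (0 < n)%N)
  (fi : 'I_m -> 'rV[R]_n -> R) (gfi : 'I_m -> 'rV[R]_n -> 'rV[R]_n)
  (Li : 'I_m -> R)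
  (hgrad : forall i, has_gradient (fi i) (gfi i))
  (hLi0 : forall i, 0 <= Li i)
  (hLip : forall i x y, norm2 (gfi i x - gfi i y) <= Li i * norm2 (x - y))
  (mu : R) (hmu : 0 < mu)
  (hstrong : strongly_convex mu (fun x => m%:R^-1 * \sum_(i < m) fi i x))
  (r : 'rV[R]_n -> \bar R)
  (hproper : proper_fun r) (hclosed : closed_fun r) (hconv : convex_efun r)
  (xstar : 'rV[R]_n)
  (hxstar : is_minimizer
     (fun x => ((m%:R^-1 * \sum_(i < m) fi i x)%:E + r x)%E) xstar)
  (K : nat) (eta : R)
  (heta0 : 0 < eta)
  (heta : eta <= 1 / ((m%:R^-1 * \sum_(i < m) Li i) * (K%:R + 1)))
  (x : nat -> 'rV[R]_n) (tau : 'I_m -> nat -> nat)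
  (htau : forall i k, (k - K <= tau i k <= k)%N)
  (hiter : forall k, is_prox r eta
     (x k - eta *: (m%:R^-1 *: \sum_(i < m) gfi i (x (tau i k))))
     (x k.+1))
  (k : nat) :
  let f := fun y => m%:R^-1 * \sum_(i < m) fi i y in
  let L := m%:R^-1 * \sum_(i < m) Li i in
  let F := fun y => ((f y)%:E + r y)%E in
  let d := fun j => eta^-1 *: (x j.+1 - x j) in
  ((- norm2 (d k) ^+ 2)%:E <=
     (- (mu / 4))%:E * (F (x k.+1) - F xstar) +
     (eta * L * \sum_(k - K <= j < k) norm2 (d j) ^+ 2)%:E)%E.
Proof.
cbv zeta.
set z := x k.+1; set xk := x k; set u := xstar.
set Gk := m%:R^-1 *: \sum_(i < m) gfi i (x (tau i k)).
set y := xk - eta *: Gk.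
have hpr := hiter k; rewrite -/z -/xk -/Gk -/y in hpr.
have [x0 hx0] := hproper.2.
have fin : forall w, r w != +oo%E -> r w = (fine (r w))%:E.
  move=> w; have := hproper.1 w; by case: (r w).
have [c0 Ec0] : exists c, r x0 = c%:E by exists (fine (r x0)); exact: fin.
have [ru Eru] : exists c, r u = c%:E.
  exists (fine (r u)); apply: fin; apply/negP => /eqP E.
  by have := hxstar x0; rewrite /= E Ec0 /= addey // -EFinD leye_eq.
have [rz Erz] : exists c, r z = c%:E.
  exists (fine (r z)); apply: fin; apply/negP => /eqP E.
  by have := hpr x0; rewrite /= E Ec0 /= gt0_muley ?lte_fin // addey // -EFinM -EFinD leye_eq.
have hR : eta * (rz - ru) <= dotv (z - y) (u - z).
  apply: (@small_t _ _ _ (1 / 2 * dotv (u - z) (u - z))).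
    by rewrite mulr_ge0 ?dotv_ge0.
  move=> t /andP[t0 t1].
  set w := t *: u + (1 - t) *: z.
  have hc := hconv u z t; rewrite -/w Eru Erz -!EFinM -EFinD in hc.
  have /hc {}hc : 0 <= t <= 1 by rewrite t1 ltW.
  have [rw Erw] : exists c, r w = c%:E.
    exists (fine (r w)); apply: fin; apply/negP => /eqP E.
    by move: hc; rewrite E leye_eq.
  rewrite Erw lee_fin in hc.
  have hp := hpr w; rewrite /= Erz Erw -!EFinM -!EFinD lee_fin !norm2_sq in hp.
  have ew : w - y = (z - y) + t *: (u - z).
    by apply/rowP => j; rewrite !mxE; ring.
  rewrite ew quad1 in hp.
  move: hp hc; set ev := dotv (z - y) (u - z); set vv := dotv (u - z) (u - z).
  set ee := dotv (z - y) (z - y) => hp hc.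
  have hv : 0 <= vv by exact: dotv_ge0.
  have : t * (eta * (rz - ru) - (ev + t * (1 / 2 * vv))) <= 0 by nra.
  by rewrite pmulr_rle0 // subr_le0.
set v := u - z.
pose S := (\sum_(i < m) fi i : 'rV[R]_n -> R).
pose Sf := m%:R^-1 \*: S.
have Sx : forall p, Sf p = m%:R^-1 * \sum_(i < m) fi i p.
  by move=> p; rewrite /Sf /S /= fct_sumE.
have dfi : forall i, derivable (fi i) z v.
  by move=> i; apply: diff_derivable; exact: (hgrad i z).1.
have der : derivable Sf z v by apply: derivableZ; apply: derivable_sum.
have DS : 'D_v Sf z = m%:R^-1 * \sum_(i < m) dotv (gfi i z) v.
  rewrite deriveZ; last exact: derivable_sum.
  rewrite derive_sum //; congr (_ * _).
  apply: eq_bigr => i _; rewrite deriveE; [exact: (hgrad i z).2 | exact: (hgrad i z).1].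
set gu := m%:R^-1 * \sum_(i<m) fi i u - mu / 2 * dotv u u.
set gz := m%:R^-1 * \sum_(i<m) fi i z - mu / 2 * dotv z z.
have hF : m%:R^-1 * \sum_(i < m) dotv (gfi i z) v <= gu - gz + mu * dotv z v.
  apply: (@lim_ineq _ _ Sf z v _ _ (mu / 2 * dotv v v) der DS).
  move=> h /andP[h0 h1].
  have hs := hstrong u z h; rewrite /= in hs.
  have /hs {}hs : 0 <= h <= 1 by rewrite h1 ltW.
  have ep : h *: u + (1 - h) *: z = z + h *: v.
    by apply/rowP => j; rewrite !mxE; ring.
  rewrite ep !norm2_sq quad1 in hs.
  rewrite !Sx (addrC (h *: v) z) ler_pdivrMl //.
  move: hs; rewrite -/gu -/gz.
  rewrite /gz => hs; nra.
  set dk := eta^-1 *: (x k.+1 - x k).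
set grad := m%:R^-1 *: \sum_(i < m) gfi i z.
have hgv : dotv grad v = m%:R^-1 * \sum_(i < m) dotv (gfi i z) v.
  by rewrite /grad dotvZl dotv_sum.
rewrite -hgv in hF.
have eta0 : eta != 0 by rewrite gt_eqF.
have he : z - y = eta *: dk + eta *: Gk.
  by rewrite /dk /y /z /xk; apply/rowP => j; rewrite !mxE mulVKf //; ring.
rewrite he dotvDl !dotvZl -mulrDr in hR.
have hR' : rz - ru <= dotv dk v + dotv Gk v.
  by move: hR; rewrite ler_pM2l // /dk /Gk !dotvZl.
set A := grad - Gk.
set E := A + (-1) *: dk.
have hE1 := dotv_ge0 (E + mu *: v).
rewrite (quad1 mu E v) in hE1.
have hEv : dotv E v = dotv grad v - dotv Gk v - dotv dk v.
  by rewrite /E (dotvDl A) (dotvZl (-1) dk) /A (dotvBl grad Gk); ring.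
have hEE : dotv E E = dotv A A - 2 * dotv A dk + dotv dk dk.
  by rewrite /E (quad1 (-1) A dk); ring.
have hAp := dotv_ge0 (A + 1 *: dk).
rewrite (quad1 1 A dk) in hAp.
have hzv : dotv z v = dotv z u - dotv z z by rewrite /v (dotvBr u z z).
have hvv : dotv v v = dotv u u - 2 * dotv z u + dotv z z.
  by rewrite /v (dotvBl u z) (dotvBr u z u) (dotvBr u z z) (dotvC u z); ring.
set Lm := m%:R^-1 * \sum_(i < m) Li i.
pose dd := fun j => eta^-1 *: (x j.+1 - x j).
set Sd := \sum_(k - K <= j < k.+1) norm2 (dd j).
have hm0 : 0 < m%:R :> R by rewrite ltr0n.
have hmi : 0 <= m%:R^-1 :> R by rewrite invr_ge0 ltW.
have hstep : forall j, norm2 (x j.+1 - x j) = eta * norm2 (dd j).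
  by move=> j; rewrite /dd norm2Z gtr0_norm ?invr_gt0 // mulVKf.
have hx : forall i, norm2 (z - x (tau i k)) <= eta * Sd.
  move=> i; have /andP[t1 t2] := htau i k.
  have -> : z - x (tau i k) = \sum_(tau i k <= j < k.+1) (x j.+1 - x j).
    by rewrite telescope_sumr // leqW.
  apply: le_trans (norm2_sum _ _ _) _.
  rewrite (eq_bigr _ (fun j _ => hstep j)) -mulr_sumr.
  apply: ler_wpM2l; first exact: ltW.
  rewrite /Sd (@big_cat_nat _ _ _ (tau i k) (k - K) k.+1) //; last exact: leqW.
  rewrite -[X in X <= _]add0r; apply: lerD => //.
  by apply: sumr_ge0 => j _; exact: norm2_ge0.
have hA : norm2 A <= Lm * (eta * Sd).
  have -> : A = m%:R^-1 *: \sum_(i < m) (gfi i z - gfi i (x (tau i k))).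
    by rewrite /A /grad /Gk -scalerBr -sumrB.
  rewrite norm2Z ger0_norm // /Lm -mulrA ler_wpM2l //.
  apply: le_trans (norm2_sum _ _ _) _.
  rewrite mulr_suml; apply: ler_sum => i _.
  by apply: le_trans (hLip _ _ _) _; rewrite ler_wpM2l.
have hK : (k - K <= k)%N by rewrite leq_subr.
set Q := \sum_(k - K <= j < k) norm2 (dd j) ^+ 2.
have hQ : 0 <= Q by apply: sumr_ge0 => j _; rewrite sqr_ge0.
have hS : Sd ^+ 2 <= (K%:R + 1) * (Q + norm2 dk ^+ 2).
  apply: le_trans (sum_sq_le _ _) _.
  have -> : size (index_iota (k - K) k.+1) = (k.+1 - (k - K))%N.
    by rewrite /index_iota size_iota.
  rewrite big_nat_recr //=.
  apply: ler_wpM2r; first by rewrite addr_ge0 ?sqr_ge0.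
  by rewrite natr1 ler_nat leq_subLR addnS ltnS addnCB leq_addr.
have hL0 : 0 <= Lm by rewrite /Lm mulr_ge0 // sumr_ge0.
have hetaL : eta * Lm * (K%:R + 1) <= 1.
  have [L0|Lp] := eqVneq Lm 0; first by rewrite L0 mulr0 mul0r ler01.
  have hLK : 0 < Lm * (K%:R + 1).
    by rewrite mulr_gt0 // ?lt_def ?Lp //; lra.
  by rewrite -mulrA; move: heta; rewrite ler_pdivlMr.
rewrite Erz Eru -!EFinD lee_fin.
set fz := m%:R^-1 * \sum_(i < m) fi i z.
set fu := m%:R^-1 * \sum_(i < m) fi i u.
set Fk := fz + rz - (fu + ru).
have epp := norm2_sq dk.
have eA := norm2_sq A.
set pp := norm2 dk ^+ 2 in hS epp *.
set AA := norm2 A ^+ 2 in eA *.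
set Ev := dotv E v in hEv hE1 *.
set vv := dotv v v in hvv hE1 *.
set EE := dotv E E in hEE hE1 *.
have s1 : Fk <= - Ev - mu / 2 * vv.
  rewrite /Fk hEv hvv; move: hF hR'; rewrite /gu /gz hzv -/fz -/fu; nra.
have s2 : 2 * mu * (- Ev - mu / 2 * vv) <= EE by nra.
have s3 : EE <= 2 * AA + 2 * pp.
  by rewrite hEE -eA -epp; move: hAp; rewrite expr1n !mul1r mulr1; lra.
have hnA := norm2_ge0 A.
have hSd : 0 <= Sd by apply: sumr_ge0 => j _; exact: norm2_ge0.
have s4a : AA <= (Lm * (eta * Sd)) ^+ 2.
  by rewrite /AA; nra.
have hetaL0 : 0 <= eta * Lm by rewrite mulr_ge0 // ltW.
have s4b : (Lm * (eta * Sd)) ^+ 2 <= (eta * Lm) ^+ 2 * ((K%:R + 1) * (Q + pp)).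
  rewrite -[X in X <= _]mul1r; rewrite (_ : (Lm * (eta * Sd)) ^+ 2 = (eta * Lm) ^+ 2 * Sd ^+ 2); last by ring.
  by rewrite mul1r ler_wpM2l // sqr_ge0.
have hQp : 0 <= Q + pp by rewrite addr_ge0 // /pp sqr_ge0.
have s4c : (eta * Lm) ^+ 2 * ((K%:R + 1) * (Q + pp)) <= eta * Lm * (Q + pp).
  rewrite (_ : (eta * Lm) ^+ 2 * ((K%:R + 1) * (Q + pp)) = (eta * Lm * (Q + pp)) * (eta * Lm * (K%:R + 1))); last by ring.
  by rewrite ler_piMr // mulr_ge0.
have hK0 : 0 <= K%:R :> R by rewrite ler0n.
have s5 : eta * Lm <= 1 by nra.
have hpp : 0 <= pp by rewrite /pp sqr_ge0.
have s6 : AA <= eta * Lm * Q + pp by nra.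
have s7 : mu * Fk <= AA + pp by nra.
nra.
Qed.
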